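(* Let $H$ be a Hilbert space and $\ell\ge1$. The formula \[ \|(\xi_1,\xi_2,\dots,\xi_\ell)\|_{S1}=\operatorname{trace}\sqrt{(\langle\xi_i,\xi_j\rangle)_{i,j=1}^\ell} \] (positive semidefinite square root of the $\ell\times\ell$ Gram matrix) defines a norm on the direct sum $H^\ell=H\oplus\cdots\oplus H$ of $\ell$ copies of $H$. *)

(* Defs.v *)
(* Complex Hilbert spaces are modelled as an lmodType over
   the complex numbers R[i] (R : realType) equipped with a MathComp inner
   product {dot U for conjC} (hermitian, linear in the 1st argument,
   conjugate-linear in the 2nd, positive definite), plus Cauchy completeness
   for the induced norm. *)
From HB Require Import structures.
From mathcomp Require Import all_boot all_order all_algebra.
From mathcomp Require Import sesquilinear spectral.
From mathcomp Require Import reals complex.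
From Stdlib Require Import ClassicalEpsilon.

Set Implicit Arguments.
Unset Strict Implicit.
Unset Printing Implicit Defensive.

Import Order.TTheory GRing.Theory Num.Theory Num.Def.
Local Open Scope ring_scope.

Section Defs.
Variable C : numClosedFieldType.

Definition ipnorm (U : lmodType C) (form : {dot U for conjC}) (u : U) : C :=
  sqrtC (form u u).

Definition ip_complete (U : lmodType C) (form : {dot U for conjC}) : Prop :=
  forall u : nat -> U,
    (forall e : C, 0 < e -> exists N : nat, forall m n : nat,
        (N <= m)%N -> (N <= n)%N -> ipnorm form (u m - u n) < e) ->
    exists x : U, forall e : C, 0 < e -> exists N : nat, forall n : nat,
        (N <= n)%N -> ipnorm form (u n - x) < e.

Definition psdmx n (M : 'M[C]_n) : Prop :=
  map_mx Num.conj (M^T) = M /\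
  forall v : 'rV[C]_n, 0 <= (v *m M *m map_mx Num.conj (v^T)) 0 0.

Definition psd_sqrtmx n (A : 'M[C]_n) : 'M[C]_n :=
  epsilon (inhabits 0) (fun S : 'M[C]_n => psdmx S /\ S *m S = A).

Definition gram (U : lmodType C) (form : {dot U for conjC}) l
  (xi : 'I_l -> U) : 'M[C]_l := \matrix_(i, j) form (xi i) (xi j).

Definition S1norm (U : lmodType C) (form : {dot U for conjC}) l
  (xi : 'I_l -> U) : C := \tr (psd_sqrtmx (gram form xi)).

(* N is a norm on H^l = 'I_l -> U (pointwise vector-space structure);
   values in C, so 0 <= N x says N x is a nonnegative real. *)
Definition is_norm_on_power (U : lmodType C) l (N : ('I_l -> U) -> C) : Prop :=
  [/\ forall x, 0 <= N x,
      forall x, N x = 0 -> forall i, x i = 0,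
      forall (a : C) x, N (fun i => a *: x i) = `|a| * N x &
      forall x y, N (fun i => x i + y i) <= N x + N y].

End Defs.

(* Main.v *)
Require Import Defs.
From HB Require Import structures.
From mathcomp Require Import all_boot all_order all_algebra.
From mathcomp Require Import sesquilinear spectral.
From mathcomp Require Import reals complex.
From Stdlib Require Import ClassicalEpsilon FunctionalExtensionality.

Set Implicit Arguments.
Unset Strict Implicit.
Unset Printing Implicit Defensive.
Import Order.TTheory GRing.Theory Num.Theory Num.Def.
Local Open Scope ring_scope.
Local Open Scope sesquilinear_scope.

Section Work.
Variable C : numClosedFieldType.
Variable U : lmodType C.
Variable form : {dot U for conjC}.
Local Notation "''[' u , v ]" := (form u%R v%R) : ring_scope.
Local Notation "''[' u ]" := '[u, u]%R : ring_scope.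
Variable l : nat.
Implicit Types x y e : 'I_l -> U.

Definition mxact (M : 'M[C]_l) (x : 'I_l -> U) : 'I_l -> U :=
  fun j => \sum_i M j i *: x i.

Lemma mxact_comp A B x : mxact A (mxact B x) = mxact (A *m B) x.
Proof.
apply: functional_extensionality => j; rewrite /mxact.
under eq_bigr do rewrite scaler_sumr.
rewrite exchange_big /=; apply: eq_bigr => i _.
rewrite mxE scaler_suml; apply: eq_bigr => k _.
by rewrite scalerA.
Qed.

Lemma mxact1 x : mxact 1%:M x = x.
Proof.
apply: functional_extensionality => j; rewrite /mxact (bigD1 j) //= big1 ?addr0.
  by rewrite mxE eqxx scale1r.
by move=> i /negPf ij; rewrite mxE eq_sym ij scale0r.
Qed.

Lemma gram_mxact M x :
  gram form (mxact M x) = M *m gram form x *m M ^t*.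
Proof.
apply/matrixP => j k; rewrite !mxE /mxact.
rewrite linear_sumlz /=.
under eq_bigr do rewrite linearZl_LR /= linear_sumr /= big_distrr /=.
rewrite exchange_big /=; apply: eq_bigr => i _.
rewrite !mxE big_distrl /=; apply: eq_bigr => m _.
rewrite linearZr_LR /= !mxE.
by rewrite -mulrA [_ * conjC _]mulrC.
Qed.

Lemma trmxCM m n p (A : 'M[C]_(m, n)) (B : 'M[C]_(n, p)) : (A *m B) ^t* = B ^t* *m A ^t*.
Proof. by rewrite trmx_mul map_mxM. Qed.

Lemma quad_entry (W A : 'M[C]_l) k :
  (row k W *m A *m (row k W) ^t*) 0 0 = (W *m A *m W ^t*) k k.
Proof.
rewrite !mxE; apply: eq_bigr => j _; rewrite !mxE; congr (_ * _).
by apply: eq_bigr => i _; rewrite !mxE.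
Qed.

Lemma diag_quad (w : 'rV[C]_l) (E : 'rV[C]_l) :
  (w *m diag_mx E *m w ^t*) 0 0 = \sum_k E 0 k * `|w 0 k| ^+ 2.
Proof.
rewrite mul_mx_diag !mxE; apply: eq_bigr => k _; rewrite !mxE normCK.
by rewrite mulrAC mulrC.
Qed.

Definition nnegrow (E : 'rV[C]_l) := forall k, 0 <= E 0 k.

Lemma diag_tC (E : 'rV[C]_l) : nnegrow E -> (diag_mx E) ^t* = diag_mx E.
Proof.
move=> E0; apply/matrixP => i j; rewrite !mxE.
case: (eqVneq i j) => [->|ij]; last by rewrite /= !mulr0n conjC0.
by rewrite /= !mulr1n conj_Creal // ger0_real.
Qed.

Lemma psd_of_decomp (V : 'M[C]_l) (E : 'rV[C]_l) :
  nnegrow E -> psdmx (V ^t* *m diag_mx E *m V).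
Proof.
move=> E0; split.
  by rewrite !trmxCM trmxCK diag_tC // mulmxA.
move=> v; have -> : v *m (V ^t* *m diag_mx E *m V) *m map_mx Num.conj v^T
   = (v *m V ^t*) *m diag_mx E *m (v *m V ^t*) ^t*.
  by rewrite trmxCM trmxCK !mulmxA.
by rewrite diag_quad sumr_ge0 // => k _; rewrite mulr_ge0 // exprn_ge0.
Qed.

Lemma herm_decomp (A : 'M[C]_l) : A ^t* = A ->
  exists V (d : 'rV[C]_l), [/\ V *m V ^t* = 1%:M, V ^t* *m V = 1%:M &
     A = V ^t* *m diag_mx d *m V].
Proof.
move=> hA.
have hh : A \is hermsymmx by apply/is_hermitianmxP; rewrite expr0 scale1r hA.
have /orthomx_spectralP Adec := hermitian_normalmx hh.
exists (spectralmx A), (spectral_diag A).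
have Vu := spectral_unitarymx A.
have := Vu => /unitarymxP VV.
split => //; last by rewrite -invmx_unitary.
by rewrite -invmx_unitary // mulVmx // spectral_unit.
Qed.

Lemma psd_decomp (A : 'M[C]_l) : psdmx A ->
  exists V (d : 'rV[C]_l), [/\ V *m V ^t* = 1%:M, V ^t* *m V = 1%:M,
     nnegrow d & A = V ^t* *m diag_mx d *m V].
Proof.
case=> hA hq; have [V [d [V1 V2 Ad]]] := herm_decomp hA.
exists V, d; split => // k.
have := hq (row k V); rewrite quad_entry Ad !mulmxA V1 mul1mx -mulmxA V1 mulmx1.
by rewrite mxE eqxx mulr1n.
Qed.


Lemma gram_herm x : (gram form x) ^t* = gram form x.
Proof.
apply/matrixP => i j; rewrite !mxE.
by rewrite [in RHS]hermC /= expr0 mul1r.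
Qed.

Lemma gram_quad x (v : 'rV[C]_l) :
  (v *m gram form x *m v ^t*) 0 0 = '[\sum_i v 0 i *: x i].
Proof.
rewrite mxE linear_sumlz /=.
under [RHS]eq_bigr do rewrite linearZl_LR /= linear_sumr /= big_distrr /=.
rewrite [RHS]exchange_big /=; apply: eq_bigr => i _.
rewrite !mxE big_distrl /=; apply: eq_bigr => m _.
rewrite linearZr_LR /= !mxE.
by rewrite -mulrA [conjC _ * _]mulrC.
Qed.

Lemma gram_psd x : psdmx (gram form x).
Proof.
split; first exact: gram_herm.
by move=> v; rewrite gram_quad dnorm_ge0.
Qed.

Lemma sqrt_exists x : exists S, psdmx S /\ S *m S = gram form x.
Proof.
have [V [d [V1 V2 d0 Gd]]] := psd_decomp (gram_psd x).
pose E : 'rV[C]_l := \row_k sqrtC (d 0 k).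
have E0 : nnegrow E by move=> k; rewrite mxE sqrtC_ge0.
exists (V ^t* *m diag_mx E *m V); split; first exact: psd_of_decomp.
rewrite Gd -!mulmxA; congr (_ *m _).
rewrite (mulmxA V) V1 mul1mx mulmxA mulmx_diag.
congr (diag_mx _ *m _); apply/rowP => k; rewrite !mxE.
by rewrite -expr2 sqrtCK.
Qed.

Lemma sqrt_spec x : psdmx (psd_sqrtmx (gram form x)) /\
  psd_sqrtmx (gram form x) *m psd_sqrtmx (gram form x) = gram form x.
Proof.
rewrite /psd_sqrtmx; apply: (epsilon_spec (inhabits 0) (fun S : 'M[C]_l => psdmx S /\ S *m S = gram form x)).
exact: sqrt_exists.
Qed.


Lemma S1_struct x : exists V (E : 'rV[C]_l),
  [/\ V *m V ^t* = 1%:M, V ^t* *m V = 1%:M, nnegrow E,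
      S1norm form x = \sum_k E 0 k &
      forall j k, '[mxact V x j, mxact V x k] = (j == k)%:R * E 0 k ^+ 2].
Proof.
have [Sp SS] := sqrt_spec x.
have [V [E [V1 V2 E0 SE]]] := psd_decomp Sp.
exists V, E; split => //.
  rewrite /S1norm SE -mulmxA mxtrace_mulC -mulmxA V1 mulmx1 mxtrace_diag.
  by [].
have G : gram form (mxact V x) = diag_mx E *m diag_mx E.
  rewrite gram_mxact -SS SE !mulmxA V1 mul1mx.
  rewrite -[diag_mx E *m V *m V ^t*]mulmxA V1 mulmx1.
  rewrite -[diag_mx E *m diag_mx E *m V *m V ^t*]mulmxA V1 mulmx1.
  by [].
move=> j k; move/matrixP: G => /(_ j k); rewrite mxE => ->.
rewrite mulmx_diag !mxE; case: (eqVneq j k) => [->|jk].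
  by rewrite /= mulr1n mul1r expr2.
by rewrite /= mulr0n mul0r.
Qed.


Lemma re_bound u v : '[v] <= 1 -> 'Re '[u, v] <= sqrtC '[u].
Proof.
move=> v1; set a := sqrtC '[u].
have a0 : 0 <= a by rewrite sqrtC_ge0 dnorm_ge0.
have [->|unz] := eqVneq u 0; first by rewrite linear0l raddf0.
have apos : 0 < a by rewrite sqrtC_gt0 dnorm_gt0.
have h := dnorm_ge0 form (u - a *: v).
rewrite dnormB dnormZ linearZr_LR /= in h.
set z := '[u, v] in h.
have aC : a^* = a by rewrite conj_Creal // ger0_real.
have ua : '[u] = a ^+ 2 by rewrite sqrtCK.
rewrite aC rmorphM /= aC -mulrDr ger0_norm // ua subr_ge0 in h.
have zz : z + z^* = 2 * 'Re z by rewrite ReE mulrC divfK // pnatr_eq0.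
rewrite zz in h.
have h2 : a * 2 * 'Re z <= a * 2 * a.
  rewrite -mulrA; apply: (le_trans h).
  rewrite [a * 2 * a]mulrAC -expr2 mulr_natr mulr2n.
  by rewrite lerD2l ler_piMr // exprn_ge0.
by rewrite ler_pM2l ?mulr_gt0 ?ltr0n in h2.
Qed.

Definition admissible e :=
  (forall j k, j != k -> '[e j, e k] = 0) /\ (forall j, '[e j] <= 1).

Lemma key x (M : 'M[C]_l) e : M ^t* *m M = 1%:M -> admissible e ->
  'Re (\sum_j '[mxact M x j, e j]) <= S1norm form x.
Proof.
move=> hM [eo e1].
have [V [E [V1 V2 E0 SN G]]] := S1_struct x.
set y := mxact V x in G.
have xy : x = mxact (V ^t*) y by rewrite /y mxact_comp V2 mxact1.
rewrite SN xy mxact_comp; set W := M *m V ^t*.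
have W1 : W ^t* *m W = 1%:M.
  by rewrite /W trmxCM trmxCK mulmxA -(mulmxA V) hM mulmx1 V1.
have ny k : '[y k] = E 0 k ^+ 2 by rewrite G eqxx mul1r.
have -> : \sum_j '[mxact W y j, e j] =
    \sum_k '[y k, \sum_j (W j k)^* *: e j].
  rewrite /mxact.
  under eq_bigr do rewrite linear_sumlz.
  rewrite exchange_big /=; apply: eq_bigr => k _.
  rewrite linear_sumr /=; apply: eq_bigr => j _.
  by rewrite linearZl_LR linearZr_LR /= conjCK.
rewrite raddf_sum /=; apply: ler_sum => k _.
set g := \sum_j _ *: e j.
have g1 : '[g] <= 1.
  have -> : '[g] = \sum_j `|W j k| ^+ 2 * '[e j].
    rewrite /g linear_sumlz /=; apply: eq_bigr => j _.
    rewrite linearZl_LR linear_sumr /= (bigD1 j) //= big1 ?addr0.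
      by rewrite linearZr_LR /= conjCK mulrA normCKC.
    by move=> i ij; rewrite linearZr_LR /= eo ?mulr0 // eq_sym.
  apply: le_trans (_ : \sum_j `|W j k| ^+ 2 <= 1).
    by apply: ler_sum => j _; rewrite ler_piMr // exprn_ge0.
  move/matrixP: W1 => /(_ k k); rewrite !mxE eqxx /= mulr1n => <-.
  by rewrite le_eqVlt; apply/orP; left; apply/eqP; apply: eq_bigr => j _; rewrite !mxE normCKC.
have -> : E 0 k = sqrtC (form (y k) (y k)) by rewrite ny sqrCK.
exact: re_bound.
Qed.


Lemma S1_ge0 x : 0 <= S1norm form x.
Proof.
have [V [E [_ _ E0 -> _]]] := S1_struct x.
by apply: sumr_ge0 => k _; exact: E0.
Qed.

Lemma S1_Re x : 'Re (S1norm form x) = S1norm form x.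
Proof. by apply/Creal_ReP; rewrite ger0_real // S1_ge0. Qed.

Lemma attain x : exists V e, [/\ V ^t* *m V = 1%:M, admissible e &
  S1norm form x = \sum_k '[mxact V x k, e k]].
Proof.
have [V [E [V1 V2 E0 SN G]]] := S1_struct x.
pose s k := if E 0 k == 0 then 0 else (E 0 k)^-1.
have s0 k : 0 <= s k by rewrite /s; case: ifP => // _; rewrite invr_ge0 E0.
have sC k : (s k)^* = s k by rewrite conj_Creal // ger0_real.
have sE k : s k * E 0 k = (E 0 k != 0)%:R.
  by rewrite /s; case: (eqVneq (E 0 k) 0) => [->|nz] /=; rewrite ?mul0r ?mulVf.
exists V, (fun k => s k *: mxact V x k); split => //.
  split.
    move=> j k jk; rewrite linearZl_LR linearZr_LR /= G (negPf jk) /=.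
    by rewrite !mul0r !mulr0.
  move=> j; rewrite linearZl_LR linearZr_LR /= G eqxx mul1r sC.
  rewrite mulrA -expr2 -exprMn sE; case: (E 0 j != 0) => /=.
    by rewrite expr1n.
  by rewrite expr0n /= ler01.
rewrite SN; apply: eq_bigr => k _.
rewrite linearZr_LR /= G eqxx mul1r sC expr2 mulrA sE.
by case: (eqVneq (E 0 k) 0) => [->|nz] /=; rewrite ?mul1r ?mul0r ?mulr0.
Qed.

Lemma admissibleZ e c : admissible e -> `|c| <= 1 ->
  admissible (fun j => c *: e j).
Proof.
move=> [eo e1] c1; split.
  by move=> j k jk; rewrite linearZl_LR linearZr_LR /= eo // !mulr0.
move=> j; rewrite linearZl_LR linearZr_LR /= mulrA -normCK.
apply: mulr_ile1; first exact: exprn_ge0.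
- exact: (dnorm_ge0 form (e j)).
- by rewrite exprn_ile1.
- exact: e1.
Qed.

Lemma mxactZ V a x k :
  mxact V (fun i => a *: x i) k = a *: mxact V x k.
Proof.
rewrite /mxact scaler_sumr; apply: eq_bigr => i _.
by rewrite !scalerA mulrC.
Qed.

Lemma mxactD V x y k :
  mxact V (fun i => x i + y i) k = mxact V x k + mxact V y k.
Proof.
by rewrite /mxact -big_split /=; apply: eq_bigr => i _; rewrite scalerDr.
Qed.

Lemma hom_le a x : S1norm form (fun i => a *: x i) <= `|a| * S1norm form x.
Proof.
have [V [e [V1 ad Ne]]] := attain (fun i => a *: x i).
pose u := a / `|a|.
have au : a = `|a| * u.
  rewrite /u; case: (eqVneq a 0) => [->|nz]; first by rewrite normr0 mul0r.
  by rewrite mulrC divfK // normr_eq0.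
have u1 : `|u^*| <= 1.
  rewrite /u norm_conjC normrM normfV normr_id.
  case: (eqVneq a 0) => [->|nz]; first by rewrite normr0 mul0r ler01.
  by rewrite mulfV ?normr_eq0.
rewrite -S1_Re Ne.
have -> : \sum_k '[mxact V (fun i => a *: x i) k, e k] =
   `|a| * \sum_k '[mxact V x k, u^* *: e k].
  rewrite big_distrr /=; apply: eq_bigr => k _.
  by rewrite mxactZ linearZl_LR linearZr_LR /= conjCK mulrA -au.
rewrite ReMl ?ger0_real //.
apply: ler_wpM2l => //; exact (key x V1 (admissibleZ ad u1)).
Qed.


Lemma S1_is_norm : is_norm_on_power (@S1norm C U form l).
Proof.
split.
- exact: S1_ge0.
- move=> x N0 i.
  have [V [E [V1 V2 E0 SN G]]] := S1_struct x.
  rewrite SN in N0.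
  have Ek k : E 0 k = 0.
    by apply: (psumr_eq0P _ N0) => // j _; exact: E0.
  have y0 k : mxact V x k = 0.
    by apply/eqP; rewrite -(dnorm_eq0 form) G eqxx mul1r Ek expr0n.
  have -> : x = mxact (V ^t*) (mxact V x) by rewrite mxact_comp V2 mxact1.
  by rewrite [mxact (V ^t*) _ i]/mxact big1 // => j _; rewrite y0 scaler0.
- move=> a x; apply/le_anti; rewrite hom_le /=.
  case: (eqVneq a 0) => [->|nz].
    by rewrite normr0 mul0r S1_ge0.
  have := hom_le a^-1 (fun i => a *: x i).
  have -> : (fun i => a^-1 *: (a *: x i)) = x.
    by apply: functional_extensionality => i; rewrite scalerA mulVf // scale1r.
  move=> h; rewrite -(ler_pM2l (_ : 0 < `|a|^-1)); last by rewrite invr_gt0 normr_gt0.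
  by rewrite mulrA mulVf ?normr_eq0 // mul1r -normfV.
- move=> x y.
  have [V [e [V1 ad Ne]]] := attain (fun i => x i + y i).
  rewrite -S1_Re Ne.
  under eq_bigr do rewrite mxactD linearDl.
  rewrite big_split raddfD /=.
  by apply: lerD; [exact (key x V1 ad) | exact (key y V1 ad)].
Qed.

End Work.

Theorem lemma1p7 (R : realType) (H : lmodType R[i])
  (form : {dot H for conjC}) (Hcomplete : ip_complete form)
  (l : nat) (hl : (1 <= l)%N) :
  is_norm_on_power (@S1norm _ H form l).
Proof. exact: S1_is_norm. Qed.
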